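(* Let $\mathcal H_+=\mathcal H_-=\mathbb C^2$, $\mathcal H=\mathcal H_+\oplus\mathcal H_-$. Fix $b>0$ and $d_1,d_2\in i\mathbb R$, and put $B=\begin{pmatrix}b&0\\0&0\end{pmatrix}$, $D=\begin{pmatrix}d_1&0\\0&d_2\end{pmatrix}$. For $\alpha,\beta\in\mathbb C$ with $|\alpha|^2+|\beta|^2=1$ let $u=\begin{pmatrix}\alpha&0\\ \beta&0\end{pmatrix}$ and $$\mu=\begin{pmatrix}0&-Bu^*\\ uB&D\end{pmatrix}.$$ Then for all integers $n\ge1$ and $1\le k\le n+1$ there exist polynomials $p_1,p_2$ in two variables with real coefficients (depending only on $n,k,b,d_1,d_2$) such that for all such $\alpha,\beta$, $$i^{n+1}\big(\mu H^{n-1}_{k-1}(\mu)\big)_{--}\,u=\begin{pmatrix} i\,p_1(|\alpha|^2,|\beta|^2)\,\alpha & 0\\ i\,p_2(|\alpha|^2,|\beta|^2)\,\beta & 0\end{pmatrix}.$$ Equivalently, the equation $\frac{\partial}{\partial t^n_k}u=i^{n+1}(\mu H^{n-1}_{k-1}(\mu))_{--}u$ becomes $\frac{\partial}{\partial t^n_k}\alpha=i p_1(|\alpha|^2,|\beta|^2)\alpha$, $\frac{\partial}{\partial t^n_k}\beta=i p_2(|\alpha|^2,|\beta|^2)\beta$.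
   Context: $P_+$ and $P_-$ denote the orthogonal projectors of $\mathcal H$ onto $\mathcal H_+$ and $\mathcal H_-$; for an operator $X$ on $\mathcal H$, $X_{--}$ denotes the block $P_-XP_-$ regarded as an operator on $\mathcal H_-$. For integers $m\ge 0$ and $0\le l\le m+1$ and a matrix $\mu$ on $\mathcal H$, define $$H^m_l(\mu)=\sum_{\substack{i_0,\dots,i_m\in\{0,1\}\\ i_0+\dots+i_m=l}} P_+^{i_0}\mu P_+^{i_1}\mu\cdots\mu P_+^{i_m},$$ with $P_+^0=I$ the identity and $P_+^1=P_+$. *)

(* Defs.v *)
From HB Require Import structures.
From mathcomp Require Import all_boot all_order all_algebra.
From mathcomp Require Import complex.
From mathcomp Require Import reals.
From mathcomp Require Import mpoly.
Set Implicit Arguments. Unset Strict Implicit. Unset Printing Implicit Defensive.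
Import Order.TTheory GRing.Theory Num.Theory.
Local Open Scope ring_scope.

(* H = H_+ (+) H_- = C^2 (+) C^2, realised as 'M_(2+2) block matrices;
   H_+ corresponds to the first block. *)
Section Defs.
Variable C : nzRingType.

Definition mx2 (a b c d : C) : 'M[C]_2 :=
  \matrix_(i < 2, j < 2)
    if i == ord0 then (if j == ord0 then a else b) else (if j == ord0 then c else d).

Definition Pplus : 'M[C]_(2 + 2) := block_mx 1%:M 0 0 0.

Definition Ppow (i : bool) : 'M[C]_(2 + 2) := if i then Pplus else 1%:M.

Fixpoint Hword (mu : 'M[C]_(2 + 2)) (r : seq bool) : 'M[C]_(2 + 2) :=
  match r with
  | [::] => 1%:M
  | i :: r' => mu *m Ppow i *m Hword mu r'
  end.

Definition Hterm (mu : 'M[C]_(2 + 2)) (r : seq bool) : 'M[C]_(2 + 2) :=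
  match r with
  | [::] => 1%:M
  | i0 :: r' => Ppow i0 *m Hword mu r'
  end.

Definition Hml (m l : nat) (mu : 'M[C]_(2 + 2)) : 'M[C]_(2 + 2) :=
  \sum_(t : (m.+1).-tuple bool | count id t == l) Hterm mu t.

(* X_{--} = P_- X P_- regarded as an operator on H_- *)
Definition blockmm (X : 'M[C]_(2 + 2)) : 'M[C]_2 := drsubmx X.
End Defs.

Local Open Scope complex_scope.

Definition conj_tr (R : rcfType) (A : 'M[R[i]]_2) : 'M[R[i]]_2 :=
  map_mx (@conjc R) A^T.

Definition mu_of (R : rcfType) (b : R) (d1 d2 alpha beta : R[i]) : 'M[R[i]]_(2 + 2) :=
  let B := mx2 (b%:C) 0 0 0 in
  let D := mx2 d1 0 0 d2 in
  let u := mx2 alpha 0 beta 0 in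
  block_mx 0 (- (B *m conj_tr u)) (u *m B) D.

(* Main.v *)
Require Import Defs.
From HB Require Import structures.
From mathcomp Require Import all_boot all_order all_algebra.
From mathcomp Require Import complex.
From mathcomp Require Import reals.
From mathcomp Require Import mpoly.
Import Order.TTheory GRing.Theory Num.Theory.
Local Open Scope ring_scope.
Local Open Scope complex_scope.
From mathcomp Require Import ring.
Set Implicit Arguments. Unset Strict Implicit. Unset Printing Implicit Defensive.
Section P.
Variable R : realType.
Definition vv (a b : R[i]) := fun j : 'I_2 => if j == ord0 then `|a| ^+ 2 else `|b| ^+ 2.
Definition ev (p : {mpoly R[2]}) a b := (map_mpoly (real_complex R) p).@[vv a b].
Definition isP (f : R[i] -> R[i] -> R[i]) := exists p, forall a b, f a b = ev p a b.

Lemma isP_const (c : R) : isP (fun _ _ => c%:C).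
Proof. exists c%:MP => a b; by rewrite /ev map_mpolyC mevalC. Qed.
Lemma isP_add f g : isP f -> isP g -> isP (fun a b => f a b + g a b).
Proof. move=> [p Hp] [q Hq]; exists (p + q) => a b; by rewrite /ev rmorphD mevalD Hp Hq. Qed.
Lemma isP_mul f g : isP f -> isP g -> isP (fun a b => f a b * g a b).
Proof. move=> [p Hp] [q Hq]; exists (p * q) => a b; by rewrite /ev rmorphM mevalM Hp Hq. Qed.
Lemma isP_a : isP (fun a b => `|a| ^+ 2).
Proof. exists 'X_ord0 => a b; by rewrite /ev map_mpolyX mevalXU. Qed.
Lemma isP_b : isP (fun a b => `|b| ^+ 2).
Proof. exists 'X_(1 : 'I_2) => a b; by rewrite /ev map_mpolyX mevalXU. Qed.
End P.
Section M.
Variable R : realType.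
Notation C := (R[i]).
Definition col2 (x y : C) : 'cV[C]_2 := \col_(i < 2) (if i == ord0 then x else y).

Lemma mx2_mulc (a b c d x y : C) : mx2 a b c d *m col2 x y = col2 (a*x + b*y) (c*x+d*y).
Proof.
apply/matrixP => i j; rewrite !mxE big_ord_recl big_ord1 !mxE.
by case: i => [[|[|?]] ?].
Qed.

Lemma mx2_mul (a b c d e f g h : C) :
  mx2 a b c d *m mx2 e f g h = mx2 (a*e+b*g) (a*f+b*h) (c*e+d*g) (c*f+d*h).
Proof.
apply/matrixP => i j; rewrite !mxE big_ord_recl big_ord1 !mxE.
by case: i => [[|[|?]] ?]; case: j => [[|[|?]] ?].
Qed.

Lemma mx2_eta (M : 'M[C]_2) : M = mx2 (M 0 0) (M 0 1) (M 1 0) (M 1 1).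
Proof.
apply/matrixP => i j; rewrite !mxE.
case: i => [[|[|?]] ?]; case: j => [[|[|?]] ?] //=; congr (M _ _); exact: val_inj.
Qed.

Lemma col2E0 (x y : C) : col2 x y 0 0 = x. Proof. by rewrite mxE. Qed.
Lemma col2E1 (x y : C) : col2 x y 1 0 = y. Proof. by rewrite mxE. Qed.

Lemma col2D (x y z w : C) : col2 x y + col2 z w = col2 (x + z) (y + w).
Proof. by apply/matrixP => i j; rewrite !mxE; case: ifP. Qed.
Lemma col20 : col2 0 0 = 0.
Proof. by apply/matrixP => i j; rewrite !mxE; case: ifP. Qed.

Lemma scale_mx2 (s x y : C) : s *: mx2 x 0 y 0 = mx2 (s * x) 0 (s * y) 0.
Proof. by apply/matrixP => i j; rewrite !mxE; case: ifP; case: ifP; rewrite ?mulr0. Qed.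

Lemma conj_tr_mx2 (a b c d : C) : conj_tr (mx2 a b c d) = mx2 a^*%C c^*%C b^*%C d^*%C.
Proof.
apply/matrixP => i j; rewrite !mxE.
by case: i => [[|[|?]] ?]; case: j => [[|[|?]] ?].
Qed.

Lemma mul_mx2_u (M : 'M[C]_2) (a c : C) :
  M *m mx2 a 0 c 0 = mx2 ((M *m col2 a c) 0 0) 0 ((M *m col2 a c) 1 0) 0.
Proof.
by rewrite [in LHS](mx2_eta M) [in RHS](mx2_eta M) mx2_mul mx2_mulc col2E0 col2E1 !mulr0 !addr0.
Qed.

Lemma blockmm_u (X : 'M[C]_(2 + 2)) (a c : C) :
  blockmm X *m mx2 a 0 c 0 =
  mx2 ((dsubmx (X *m col_mx 0 (col2 a c))) 0 0) 0 ((dsubmx (X *m col_mx 0 (col2 a c))) 1 0) 0.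
Proof.
rewrite mul_mx2_u /blockmm -[in RHS](submxK X) mul_block_col col_mxKd !mulmx0 add0r //.
Qed.
End M.
Section G.
Variable R : realType.
Notation C := (R[i]).
Definition Good (m : nat) (V : C -> C -> 'cV[C]_(2 + 2)) :=
  exists f0 f1 f2 : C -> C -> C, [/\ isP f0, isP f1, isP f2 &
   forall a c, V a c = col_mx (col2 ('i ^+ m.+1 * f0 a c) 0)
                              (col2 ('i ^+ m * f1 a c * a) ('i ^+ m * f2 a c * c))].

Lemma isP0 : isP (fun _ _ : C => 0).
Proof. by have := isP_const (0 : R); rewrite /isP /=; case=> p Hp; exists p => a c; rewrite -Hp. Qed.

Lemma Good_sum m (I : Type) (r : seq I) (P : pred I) (F : I -> C -> C -> 'cV[C]_(2+2)) :
  (forall i, Good m (F i)) -> Good m (fun a c => \sum_(i <- r | P i) F i a c).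
Proof.
move=> HF; elim: r => [|i r [f0 [f1 [f2 [H0 H1 H2 HV]]]]].
  exists (fun _ _ => 0), (fun _ _ => 0), (fun _ _ => 0); split; try exact: isP0.
  by move=> a c; rewrite big_nil !mulr0 !mul0r col20 col_mx0.
case: (boolP (P i)) => Pi.
  have [g0 [g1 [g2 [G0 G1 G2 GV]]]] := HF i.
  exists (fun a c => g0 a c + f0 a c), (fun a c => g1 a c + f1 a c),
         (fun a c => g2 a c + f2 a c); split; try exact: isP_add.
  move=> a c; rewrite big_cons Pi HV GV add_col_mx !col2D; congr (col_mx (col2 _ _) (col2 _ _)); ring.
exists f0, f1, f2; split => // a c; by rewrite big_cons (negbTE Pi) HV.
Qed.

Lemma Good_P m (j : bool) V : Good m V -> Good m (fun a c => Ppow C j *m V a c).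
Proof.
move=> [f0 [f1 [f2 [H0 H1 H2 HV]]]]; case: j => /=.
  exists f0, (fun _ _ => 0), (fun _ _ => 0); split => //; try exact: isP0.
  move=> a c; rewrite HV /Pplus mul_block_col !mul1mx !mul0mx !addr0 !mulr0 !mul0r col20 //.
exists f0, f1, f2; split => // a c; by rewrite mul1mx HV.
Qed.

Lemma Good_mu (bb : R) (d1 d2 : C) m V : 'Re d1 = 0 -> 'Re d2 = 0 ->
  Good m V -> Good m.+1 (fun a c => mu_of bb d1 d2 a c *m V a c).
Proof.
move=> Hd1 Hd2 [f0 [f1 [f2 [H0 H1 H2 HV]]]].
have E1 : d1 = 'i%C * (complex.Im d1)%:C by rewrite {1}(complexE d1) complexRe Hd1 add0r.
have E2 : d2 = 'i%C * (complex.Im d2)%:C by rewrite {1}(complexE d2) complexRe Hd2 add0r.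
exists (fun a c => bb%:C * (f1 a c * `|a| ^+ 2 + f2 a c * `|c| ^+ 2)),
       (fun a c => bb%:C * f0 a c + (complex.Im d1)%:C * f1 a c),
       (fun a c => bb%:C * f0 a c + (complex.Im d2)%:C * f2 a c); split.
- apply: isP_mul; first exact: isP_const.
  by apply: isP_add; apply: isP_mul => //; [exact: isP_a | exact: isP_b].
- by apply: isP_add => //; apply: isP_mul => //; exact: isP_const.
- by apply: isP_add => //; apply: isP_mul => //; exact: isP_const.
move=> a c; rewrite HV /mu_of mul_block_col conj_tr_mx2 !mx2_mul mulNmx !mx2_mulc !mul0mx !add0r.
rewrite !normCK -[_^*]/(_^*%C) -[c^*]/(c^*%C).
have Ei : 'i * 'i = -1 :> C by rewrite -expr2 -complexiE sqr_i.
have Em2 : 'i ^+ m.+2 = - 'i ^+ m :> C by rewrite !exprS mulrA Ei mulN1r.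
move: E1 E2; set e1 := complex.Im d1; set e2 := complex.Im d2; rewrite complexiE => E1 E2.
rewrite Em2 E1 E2 exprS.
apply/matrixP => i j; rewrite !mxE; case: splitP => k _; rewrite !mxE; case: ifP => _; ring.
Qed.
End G.
Lemma Good_Hword (R : realType) (bb : R) (d1 d2 : R[i]) m V (r : seq bool) :
  'Re d1 = 0 -> 'Re d2 = 0 -> Good m V ->
  Good (m + size r) (fun a c => Hword (mu_of bb d1 d2 a c) r *m V a c).
Proof.
move=> Hd1 Hd2 HV; elim: r => [|j r IH] /=.
  by case: HV => f0 [f1 [f2 [H0 H1 H2 E]]]; exists f0, f1, f2; split => // a c; rewrite addn0 mul1mx E.
rewrite addnS.
have := Good_mu bb Hd1 Hd2 (Good_P j IH).
by case=> f0 [f1 [f2 [H0 H1 H2 E]]]; exists f0, f1, f2; split => // a c; rewrite -!mulmxA E.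
Qed.

Theorem proposition3p1 (R : realType) (b : R) (d1 d2 : R[i]) :
  0 < b -> Re d1 = 0 -> Re d2 = 0 ->
  forall n k : nat, (1 <= n)%N -> (1 <= k <= n.+1)%N ->
  exists p1 p2 : {mpoly R[2]},
    forall alpha beta : R[i],
      `|alpha| ^+ 2 + `|beta| ^+ 2 = 1 ->
      let v := fun j : 'I_2 => if j == ord0 then `|alpha| ^+ 2 else `|beta| ^+ 2 in
      'i ^+ n.+1 *: (blockmm (mu_of b d1 d2 alpha beta *m
                              Hml (n.-1) (k.-1) (mu_of b d1 d2 alpha beta)))
        *m mx2 alpha 0 beta 0
      = mx2 ('i * (map_mpoly (real_complex R) p1).@[v] * alpha) 0 ('i * (map_mpoly (real_complex R) p2).@[v] * beta) 0.
Proof.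
move=> _ Hd1 Hd2 [//|n] k _ _ /=.
have G0 : Good 0 (fun a c : R[i] => col_mx 0 (col2 a c)).
  exists (fun _ _ => 0), (fun _ _ => 1), (fun _ _ => 1); split; try exact: isP0.
  - by have := isP_const (1 : R); rewrite /isP; case=> p Hp; exists p => a c; rewrite -Hp.
  - by have := isP_const (1 : R); rewrite /isP; case=> p Hp; exists p => a c; rewrite -Hp.
  by move=> a c; rewrite !mulr0 !expr0 !mul1r col20.
have GT : forall t : n.+1.-tuple bool,
   Good n.+1 (fun a c => mu_of b d1 d2 a c *m Hterm (mu_of b d1 d2 a c) t *m col_mx 0 (col2 a c)).
  case=> [[|j r] /= Hs] //.
  have Hr : size r = n by case/eqP: Hs.
  have := Good_mu b Hd1 Hd2 (Good_P j (Good_Hword b r Hd1 Hd2 G0)).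
  rewrite add0n Hr; case=> f0 [f1 [f2 [H0 H1 H2 E]]]; exists f0, f1, f2; split => // a c.
  by rewrite -E !mulmxA.
have [f0 [f1 [f2 [H0 H1 H2 E]]]] := Good_sum (index_enum ((n.+1).-tuple bool : finType)) (fun t : (n.+1).-tuple bool => count id t == k.-1) GT.
have Hs : isP (fun _ _ : R[i] => (-1) ^+ n.+1 : R[i]).
  exists ((-1) ^+ n.+1)%:MP => a c; rewrite /ev map_mpolyC mevalC /=; rewrite (rmorphXn (real_complex R)) (rmorphN1 (real_complex R)) //.
have [p1 Hp1] := isP_mul Hs H1.
have [p2 Hp2] := isP_mul Hs H2.
exists p1, p2 => alpha beta _.
rewrite -scalemxAl blockmm_u /Hml mulmx_sumr mulmx_suml.
rewrite E col_mxKd col2E0 col2E1 scale_mx2.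
rewrite -[(map_mpoly _ p1).@[_]]/(ev p1 alpha beta).
rewrite -[(map_mpoly _ p2).@[_]]/(ev p2 alpha beta).
rewrite -Hp1 -Hp2.
have Ei : 'i * 'i = -1 :> R[i] by rewrite -expr2 -complexiE sqr_i.
have Ex : 'i ^+ n.+2 * 'i ^+ n.+1 = 'i * (-1) ^+ n.+1 :> R[i].
  by rewrite exprS -mulrA -exprMn Ei.
rewrite -complexiE.
congr mx2; rewrite !mulrA ?Ex //; ring.
Qed.
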